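(* Let $\Omega$, $\mathbf{y}$, $Q$, $\hat{\mathbf{Y}}$, $\mathcal{M}(\mathbf{y},\hat{\mathbf{y}})$, $\mathbf{M}$, $E_m$, $f_L$ be as in the context, let $s>0$, and let $\sigma:\Omega\to(0,1)$ be arbitrary. Let $m^*\in\mathbf{M}$ be a minimizer over $\mathbf{M}$ of $$G(m)=\sum_{(\mathbf{p},\mathbf{q})\in E_m}\Big[\frac{\|\mathbf{p}-\mathbf{q}\|^2}{2s^2}+\log(1-\sigma(\mathbf{p}))-\log\sigma(\mathbf{p})\Big].$$ Then $\hat{\mathbf{y}}^*:=f_L(\mathbf{y},m^* )$ is a minimizer over $\hat{\mathbf{Y}}$ of $$F(\hat{\mathbf{y}})=\min_{m\in\mathcal{M}(\mathbf{y},\hat{\mathbf{y}})}\sum_{(\mathbf{p},\mathbf{q})\in E_m}\frac{\|\mathbf{p}-\mathbf{q}\|^2}{2s^2}\;-\;\sum_{\mathbf{p}\in\Omega}\Big[\hat{y}_{\mathbf{p}}\log\sigma(\mathbf{p})+(1-\hat{y}_{\mathbf{p}})\log(1-\sigma(\mathbf{p}))\Big],$$ and moreover $m^*$ attains the minimum $\min_{m\in\mathcal{M}(\mathbf{y},\hat{\mathbf{y}}^* )}\sum_{(\mathbf{p},\mathbf{q})\in E_m}\|\mathbf{p}-\mathbf{q}\|^2/(2s^2)$.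
   Context: $\Omega\subset\mathbb{Z}^2$ is a finite set of pixel locations, $\|\cdot\|$ the Euclidean norm, $\mathbf{y}\in\{0,1\}^{\Omega}$, $Q=\{\mathbf{q}\in\Omega: y_{\mathbf{q}}=1\}$, and for $\mathbf{z}\in\{0,1\}^{\Omega}$, $|\mathbf{z}|$ is the number of pixels with $z_{\mathbf{p}}=1$. $\hat{\mathbf{Y}}=\{\hat{\mathbf{y}}\in\{0,1\}^{\Omega}:|\hat{\mathbf{y}}|=|\mathbf{y}|\}$. For $\hat{\mathbf{y}}\in\hat{\mathbf{Y}}$, $\mathcal{M}(\mathbf{y},\hat{\mathbf{y}})$ is the set of one-to-one maps $m:Q\to\Omega$ with $\hat{y}_{m(\mathbf{q})}=1$ for all $\mathbf{q}\in Q$; $\mathbf{M}=\bigcup_{\hat{\mathbf{y}}\in\hat{\mathbf{Y}}}\mathcal{M}(\mathbf{y},\hat{\mathbf{y}})$. For $m\in\mathbf{M}$, $E_m=\{(m(\mathbf{q}),\mathbf{q}):\mathbf{q}\in Q\}$, and the label realization $f_L(\mathbf{y},m)\in\{0,1\}^{\Omega}$ is the indicator function of the image $m(Q)$. *)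

(* Defs.v *)
From Stdlib Require Import Reals ZArith List Bool.
Import ListNotations.
Open Scope R_scope.

Definition pt := (Z * Z)%type.

Definition pt_eqb (p q : pt) : bool := Z.eqb (fst p) (fst q) && Z.eqb (snd p) (snd q).

Definition sumR {A : Type} (l : list A) (f : A -> R) : R :=
  fold_right (fun a acc => f a + acc) 0 l.

Definition sqdist (p q : pt) : R :=
  IZR ((fst p - fst q) * (fst p - fst q) + (snd p - snd q) * (snd p - snd q))%Z.

Definition b2R (b : bool) : R := if b then 1 else 0.

(* A binary image z in {0,1}^Omega is a function pt -> bool (values off Omega
   are irrelevant). |z| = number of pixels of Omega with z_p = 1. *)
Definition card1 (Omega : list pt) (z : pt -> bool) : nat :=
  length (filter z Omega).

Definition Qset (Omega : list pt) (y : pt -> bool) : list pt := filter y Omega.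

Definition inYhat (Omega : list pt) (y yhat : pt -> bool) : Prop :=
  card1 Omega yhat = card1 Omega y.

(* m in M(y, yhat): a one-to-one map Q -> Omega with yhat_{m(q)} = 1
   (represented by a function pt -> pt, only its values on Q matter). *)
Definition inMy (Omega : list pt) (y yhat : pt -> bool) (m : pt -> pt) : Prop :=
  (forall q, In q (Qset Omega y) -> In (m q) Omega /\ yhat (m q) = true) /\
  (forall q1 q2, In q1 (Qset Omega y) -> In q2 (Qset Omega y) -> m q1 = m q2 -> q1 = q2).

Definition inM (Omega : list pt) (y : pt -> bool) (m : pt -> pt) : Prop :=
  exists yhat, inYhat Omega y yhat /\ inMy Omega y yhat m.

Definition fL (Omega : list pt) (y : pt -> bool) (m : pt -> pt) : pt -> bool :=
  fun p => existsb (fun q => pt_eqb (m q) p) (Qset Omega y).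

Definition match_cost (Omega : list pt) (y : pt -> bool) (s : R) (m : pt -> pt) : R :=
  sumR (Qset Omega y) (fun q => sqdist (m q) q / (2 * s ^ 2)).

Definition Gcost (Omega : list pt) (y : pt -> bool) (s : R) (sigma : pt -> R)
  (m : pt -> pt) : R :=
  sumR (Qset Omega y) (fun q =>
    sqdist (m q) q / (2 * s ^ 2) + ln (1 - sigma (m q)) - ln (sigma (m q))).

Definition bce (Omega : list pt) (sigma : pt -> R) (yhat : pt -> bool) : R :=
  - sumR Omega (fun p => b2R (yhat p) * ln (sigma p) + (1 - b2R (yhat p)) * ln (1 - sigma p)).

Definition IsMin (P : R -> Prop) (v : R) : Prop := P v /\ (forall w, P w -> v <= w).

(* Fval ... yhat v  <->  v = F(yhat), where
   F(yhat) = min_{m in M(y,yhat)} match_cost m + bce yhat. *)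
Definition Fval (Omega : list pt) (y : pt -> bool) (s : R) (sigma : pt -> R)
  (yhat : pt -> bool) (v : R) : Prop :=
  IsMin (fun c => exists m, inMy Omega y yhat m /\ c = match_cost Omega y s m)
        (v - bce Omega sigma yhat).

(* Main.v *)
Require Import Defs.
From Stdlib Require Import Reals ZArith List Bool Lra Lia.
Open Scope R_scope.

Lemma pt_eqb_spec (a p : pt) : pt_eqb a p = true <-> a = p.
Proof.
  destruct a as [a1 a2], p as [p1 p2]; unfold pt_eqb; simpl.
  rewrite andb_true_iff, !Z.eqb_eq; split.
  - intros [-> ->]; reflexivity.
  - intros H; inversion H; auto.
Qed.

Lemma sumR_plus {A} (l : list A) f g :
  sumR l (fun a => f a + g a) = sumR l f + sumR l g.
Proof. induction l; simpl; [lra|]. rewrite IHl; lra. Qed.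

Lemma sumR_ext_in {A} (l : list A) f g :
  (forall a, In a l -> f a = g a) -> sumR l f = sumR l g.
Proof.
  induction l; simpl; intros H; auto.
  rewrite H by auto; rewrite IHl; auto.
Qed.

Lemma sumR_map {A B} (l : list A) (m : A -> B) h :
  sumR (map m l) h = sumR l (fun a => h (m a)).
Proof. induction l; simpl; auto. rewrite IHl; auto. Qed.

Lemma sum_single_notin (a : pt) l h :
  ~ In a l -> sumR l (fun p => if pt_eqb a p then h p else 0) = 0.
Proof.
  induction l; simpl; intros H; auto.
  destruct (pt_eqb a a0) eqn:E.
  - apply pt_eqb_spec in E; subst; exfalso; auto.
  - rewrite IHl; auto; lra.
Qed.

Lemma sum_single (a : pt) l h :
  In a l -> NoDup l -> sumR l (fun p => if pt_eqb a p then h p else 0) = h a.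
Proof.
  induction l; simpl; intros Hin Hnd; [contradiction|].
  inversion Hnd; subst.
  destruct (pt_eqb a a0) eqn:E.
  - apply pt_eqb_spec in E; subst. rewrite sum_single_notin; auto; lra.
  - destruct Hin as [->|Hin].
    + assert (pt_eqb a a = true) by (apply pt_eqb_spec; auto). congruence.
    + rewrite IHl; auto; lra.
Qed.

Lemma sum_ind (L Om : list pt) h :
  NoDup L -> incl L Om -> NoDup Om ->
  sumR Om (fun p => if existsb (fun a => pt_eqb a p) L then h p else 0) = sumR L h.
Proof.
  induction L as [|a L IH]; intros HL Hinc HO; simpl.
  - clear. induction Om; simpl; auto. rewrite IHOm; lra.
  - inversion HL; subst.
    rewrite (sumR_ext_in _ _ (fun p => (if pt_eqb a p then h p else 0) +
       (if existsb (fun a0 => pt_eqb a0 p) L then h p else 0))).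
    + rewrite sumR_plus, IH, sum_single; auto.
      * apply Hinc; simpl; auto.
      * intros x Hx; apply Hinc; simpl; auto.
    + intros p _. destruct (pt_eqb a p) eqn:E; simpl.
      * apply pt_eqb_spec in E; subst.
        destruct (existsb (fun a0 => pt_eqb a0 p) L) eqn:E2; [|lra].
        apply existsb_exists in E2. destruct E2 as [x [Hx Ex]].
        apply pt_eqb_spec in Ex; subst; contradiction.
      * lra.
Qed.

Lemma card_sum (l : list pt) (b : pt -> bool) :
  sumR l (fun p => if b p then 1 else 0) = INR (length (filter b l)).
Proof.
  induction l; [reflexivity|]. unfold sumR in *; cbn [fold_right filter].
  destruct (b a).
  - cbn [length]. rewrite S_INR, IHl; lra.
  - rewrite IHl; lra.
Qed.

Lemma nodup_map_in {A B} (m : A -> B) (l : list A) :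
  NoDup l -> (forall x y, In x l -> In y l -> m x = m y -> x = y) -> NoDup (map m l).
Proof.
  induction l; simpl; intros H Hi; constructor.
  - inversion H; subst. intros Hin. apply in_map_iff in Hin.
    destruct Hin as [x [Ex Hx]]. assert (x = a) by (apply Hi; auto). subst; auto.
  - inversion H; subst. apply IHl; auto.
Qed.

Lemma filter_le_len (l : list pt) (a b : pt -> bool) :
  (forall x, In x l -> a x = true -> b x = true) ->
  (length (filter a l) <= length (filter b l))%nat.
Proof.
  induction l; simpl; intros H; auto.
  destruct (a a0) eqn:E.
  - rewrite (H a0) by auto; simpl. specialize (IHl (fun x Hx => H x (or_intror Hx))). lia.
  - specialize (IHl (fun x Hx => H x (or_intror Hx))). destruct (b a0); simpl; lia.
Qed.

Lemma filter_eq_len (l : list pt) (a b : pt -> bool) :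
  (forall x, In x l -> a x = true -> b x = true) ->
  length (filter a l) = length (filter b l) ->
  forall x, In x l -> a x = b x.
Proof.
  induction l; simpl; intros H Hl x Hx; [contradiction|].
  assert (H' : forall x, In x l -> a x = true -> b x = true) by (intros; apply H; auto).
  pose proof (filter_le_len l a b H') as Hle.
  destruct (a a0) eqn:E.
  - rewrite (H a0) in Hl by auto. simpl in Hl.
    destruct Hx as [<-|Hx]; [rewrite E; symmetry; apply H; auto|].
    apply IHl; auto.
  - destruct (b a0) eqn:E2; simpl in Hl; [lia|].
    destruct Hx as [<-|Hx]; [congruence|]. apply IHl; auto.
Qed.

Lemma bce_split (Om : list pt) sigma b :
  bce Om sigma b = - sumR Om (fun p => ln (1 - sigma p)) +
    sumR Om (fun p => if b p then ln (1 - sigma p) - ln (sigma p) else 0).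
Proof.
  unfold bce. induction Om; simpl; [lra|].
  unfold bce in IHOm.
  destruct (b a); simpl; lra.
Qed.

Section Main.
Variables (Omega : list pt) (y : pt -> bool) (s : R) (sigma : pt -> R).
Hypothesis HOmega : NoDup Omega.

Definition hh p := ln (1 - sigma p) - ln (sigma p).

Lemma fL_eq m p : fL Omega y m p = existsb (fun a => pt_eqb a p) (map m (Qset Omega y)).
Proof. unfold fL. induction (Qset Omega y); simpl; auto. rewrite IHl; auto. Qed.

Lemma good_map m yhat : inMy Omega y yhat m ->
  NoDup (map m (Qset Omega y)) /\ incl (map m (Qset Omega y)) Omega.
Proof.
  intros [H1 H2]; split.
  - apply nodup_map_in; auto. apply NoDup_filter; auto.
  - intros x Hx. apply in_map_iff in Hx. destruct Hx as [q [<- Hq]]. apply H1; auto.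
Qed.

Lemma sumR_one {A} (l : list A) : sumR l (fun _ => 1) = INR (length l).
Proof.
  induction l; [reflexivity|]. cbn [sumR fold_right length]. unfold sumR in *.
  rewrite S_INR, IHl; lra.
Qed.

Lemma count_fL m yhat : inMy Omega y yhat m ->
  length (filter (fL Omega y m) Omega) = length (Qset Omega y).
Proof.
  intros H. destruct (good_map m yhat H) as [Hn Hi].
  apply INR_eq. rewrite <- card_sum.
  rewrite (sumR_ext_in _ _ (fun p => if existsb (fun a => pt_eqb a p) (map m (Qset Omega y))
      then 1 else 0)) by (intros; rewrite fL_eq; auto).
  rewrite sum_ind by auto. rewrite sumR_one, length_map; auto.
Qed.

Lemma fL_agree m yhat : inYhat Omega y yhat -> inMy Omega y yhat m ->
  forall p, In p Omega -> fL Omega y m p = yhat p.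
Proof.
  intros Hy Hm. apply filter_eq_len.
  - intros x _ Hx. unfold fL in Hx. apply existsb_exists in Hx.
    destruct Hx as [q [Hq E]]. apply pt_eqb_spec in E; subst.
    apply Hm; auto.
  - rewrite (count_fL m yhat Hm). unfold inYhat, card1 in Hy. rewrite Hy. reflexivity.
Qed.

Lemma bce_agree m yhat : inYhat Omega y yhat -> inMy Omega y yhat m ->
  bce Omega sigma (fL Omega y m) = bce Omega sigma yhat.
Proof.
  intros Hy Hm. unfold bce. f_equal. apply sumR_ext_in. intros p Hp.
  rewrite (fL_agree m yhat Hy Hm p Hp); auto.
Qed.

Lemma G_split m yhat : inMy Omega y yhat m ->
  Gcost Omega y s sigma m = match_cost Omega y s m + bce Omega sigma (fL Omega y m)
     + sumR Omega (fun p => ln (1 - sigma p)).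
Proof.
  intros H. destruct (good_map m yhat H) as [Hn Hi].
  rewrite bce_split.
  rewrite (sumR_ext_in _ (fun p => if fL Omega y m p then ln (1 - sigma p) - ln (sigma p) else 0)
      (fun p => if existsb (fun a => pt_eqb a p) (map m (Qset Omega y))
      then hh p else 0)) by (intros; rewrite fL_eq; auto).
  rewrite sum_ind by auto. rewrite sumR_map. unfold Gcost, match_cost.
  rewrite (sumR_ext_in _ _ (fun q => sqdist (m q) q / (2 * s ^ 2) + hh (m q)))
    by (intros; unfold hh; lra).
  rewrite sumR_plus. lra.
Qed.

End Main.

Theorem theorem1 (Omega : list pt) (y : pt -> bool) (s : R) (sigma : pt -> R)
  (mstar : pt -> pt)
  (HOmega : NoDup Omega)
  (Hs : 0 < s)
  (Hsigma : forall p, In p Omega -> 0 < sigma p < 1)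
  (Hm_in : inM Omega y mstar)
  (Hm_min : forall m, inM Omega y m -> Gcost Omega y s sigma mstar <= Gcost Omega y s sigma m) :
  let ystar := fL Omega y mstar in
  inYhat Omega y ystar /\
  (exists vstar, Fval Omega y s sigma ystar vstar /\
     forall yhat v, inYhat Omega y yhat -> Fval Omega y s sigma yhat v -> vstar <= v) /\
  IsMin (fun c => exists m, inMy Omega y ystar m /\ c = match_cost Omega y s m)
        (match_cost Omega y s mstar) /\
  inMy Omega y ystar mstar.
Proof.
  intros ystar.
  destruct Hm_in as [y0 [Hy0 Hm0]].
  assert (HY : inYhat Omega y ystar).
  { unfold inYhat, card1, ystar. rewrite (count_fL Omega y HOmega mstar y0 Hm0). reflexivity. }
  assert (HM : inMy Omega y ystar mstar).
  { split; [|apply Hm0]. intros q Hq. split; [apply Hm0; auto|].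
    unfold ystar, fL. apply existsb_exists. exists q; split; auto. apply pt_eqb_spec; auto. }
  assert (Key : forall yhat m, inYhat Omega y yhat -> inMy Omega y yhat m ->
     match_cost Omega y s mstar + bce Omega sigma ystar <=
     match_cost Omega y s m + bce Omega sigma yhat).
  { intros yhat m Hy Hm.
    assert (Hmin := Hm_min m (ex_intro _ yhat (conj Hy Hm))).
    rewrite (G_split Omega y s sigma HOmega mstar ystar HM) in Hmin.
    rewrite (G_split Omega y s sigma HOmega m yhat Hm) in Hmin.
    rewrite (bce_agree Omega y sigma HOmega m yhat Hy Hm) in Hmin.
    fold ystar in Hmin. lra. }
  assert (HI : IsMin (fun c => exists m, inMy Omega y ystar m /\ c = match_cost Omega y s m)
        (match_cost Omega y s mstar)).
  { split; [exists mstar; auto|]. intros w [m [Hm ->]].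
    pose proof (Key ystar m HY Hm); lra. }
  split; [exact HY|]. split; [|split; auto].
  exists (match_cost Omega y s mstar + bce Omega sigma ystar). split.
  - unfold Fval. replace (match_cost Omega y s mstar + bce Omega sigma ystar - bce Omega sigma ystar)
      with (match_cost Omega y s mstar) by ring. exact HI.
  - intros yhat v Hy [[m [Hm E]] _].
    pose proof (Key yhat m Hy Hm). lra.
Qed.
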